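(* Let $G$ be a digraph, $k\in\mathbb N$, let $T\subseteq V(G)$ be a set of at most $k+1$ vertices such that every non-trivial strong component of $G-T$ is $1$-out-regular, and let $Z\subseteq V(G)\setminus T$ be such that $G[Z\cup T]$ contains no subdigraph in $\mathcal F$. Let $G'=\mathsf{torso}(G,Z)$. Then for every $S\subseteq V(G)\setminus(Z\cup T)$, the digraph $G-S$ contains a subdigraph in $\mathcal F$ if and only if $G'-S$ contains a subdigraph in $\mathcal F_{\mathsf{bad}}$.
   Context: Digraphs may have multiple arcs. A digraph is \emph{strong} if it consists of a single vertex (then it is \emph{trivial}), or if for every two distinct vertices $u,v$ there is a directed path from $u$ to $v$; a strong component is an inclusion-maximal strong induced subdigraph. A strong component is \emph{1-out-regular} if each of its vertices has out-degree exactly $1$ in it. $\mathcal F$ denotes the collection of non-trivial strong subdigraphs of $G$ that are not a simple directed cycle (so a set $S$ meets every member of $\mathcal F$ present in $G$ iff every non-trivial strong component of $G-S$ is 1-out-regular). The digraph $\mathsf{torso}(G,Z)$ has vertex set $V(G)\setminus Z$; for $u,v\notin Z$ (possibly $u=v$, giving a self-loop) it contains an arc $(u,v)$ whenever $G$ has a $u\to v$ path (closed if $u=v$) of length at least $1$ all of whose internal vertices lie in $Z$. Such an arc is \emph{good} if this path $P$ is unique and there is no cycle $O$ in $G[Z]$ sharing a vertex with $P$; otherwise it is \emph{bad}. A cycle of $\mathsf{torso}(G,Z)$ is \emph{good} if all its arcs are good. $\mathcal F_{\mathsf{bad}}$ denotes the collection of strong subdigraphs of $\mathsf{torso}(G,Z)$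 that are neither trivial nor good cycles. *)

(* Defs.v *)
(* Digraphs with multiple arcs (and loops):
   vertex type V, arc type E, with tail/head maps tl hd : E -> V. *)
From mathcomp Require Import all_boot.
Set Implicit Arguments. Unset Strict Implicit. Unset Printing Implicit Defensive.

Section Digraph.
Variables (V E : finType) (tl hd : E -> V).

Definition subdig (inG : E -> Prop) (X : {set V}) (A : {set E}) : Prop :=
  forall a, a \in A -> [/\ inG a, tl a \in X & hd a \in X].

Definition arel (A : {set E}) : rel V :=
  fun x y => [exists a in A, (tl a == x) && (hd a == y)].

Definition strong (X : {set V}) (A : {set E}) : Prop :=
  X != set0 /\ forall u v, u \in X -> v \in X -> u != v -> connect (arel A) u v.

Definition trivial (X : {set V}) (A : {set E}) : Prop :=
  #|X| = 1 /\ A = set0.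

Definition is_cycle (X : {set V}) (A : {set E}) : Prop :=
  exists s : seq E, [/\ s != [::], cycle (fun a b => hd a == tl b) s,
     uniq (map tl s), A = [set a in s] & X = tl @: A].

Definition inF (inG : E -> Prop) (X : {set V}) (A : {set E}) : Prop :=
  [/\ subdig inG X A, strong X A, ~ trivial X A & ~ is_cycle X A].

Definition induced (X : {set V}) : {set E} :=
  [set a | (tl a \in X) && (hd a \in X)].

Definition strong_component (D C : {set V}) : Prop :=
  [/\ C \subset D, strong C (induced C) &
      forall Y : {set V}, C \proper Y -> Y \subset D -> ~ strong Y (induced Y)].

Definition out_regular1 (X : {set V}) (A : {set E}) : Prop :=
  forall x, x \in X -> #|[set a in A | tl a == x]| = 1.

(* P (a nonempty arc sequence) is a u -> v path (closed if u = v) whose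
   internal vertices are pairwise distinct and lie in Z *)
Definition zpath (Z : {set V}) (u v : V) (P : seq E) : Prop :=
  match P with
  | [::] => False
  | a :: P' => [/\ tl a = u, path (fun x y => hd x == tl y) a P',
                  hd (last a P') = v,
                  all (fun b => hd b \in Z) (belast a P')
                  & uniq (map hd (belast a P'))]
  end.

Definition zcycle_meets (Z : {set V}) (P : seq E) : Prop :=
  exists (XO : {set V}) (AO : {set E}),
    [/\ subdig (fun _ => True) XO AO, XO \subset Z, is_cycle XO AO &
        exists a, a \in P /\ (tl a \in XO \/ hd a \in XO)].

(* arcs of torso(G, Z): pairs (u, v) of vertices outside Z joined by a Z-path *)
Definition torso_arc (Z : {set V}) (p : V * V) : Prop :=
  [/\ p.1 \notin Z, p.2 \notin Z & exists P, zpath Z p.1 p.2 P].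

Definition good_arc (Z : {set V}) (p : V * V) : Prop :=
  exists P, [/\ zpath Z p.1 p.2 P,
                (forall Q, zpath Z p.1 p.2 Q -> Q = P) &
                ~ zcycle_meets Z P].

End Digraph.

(* member of F_bad: a subdigraph (X, A) of torso(G, Z) (arcs are pairs) *)
Definition inFbad (V E : finType) (tl hd : E -> V) (Z : {set V})
    (X : {set V}) (A : {set (V * V)}) : Prop :=
  [/\ subdig (@fst V V) (@snd V V) (torso_arc tl hd Z) X A, X \subset ~: Z,
      strong (@fst V V) (@snd V V) X A,
      ~ trivial X A &
      ~ (is_cycle (@fst V V) (@snd V V) X A /\ forall p, p \in A -> good_arc tl hd Z p)].

(* Main.v *)
Require Import Defs.
From mathcomp Require Import all_boot.
From Stdlib Require Import Classical ClassicalEpsilon.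
Set Implicit Arguments. Unset Strict Implicit. Unset Printing Implicit Defensive.

Section G.
Variables (V E : finType) (tl hd : E -> V).
Local Notation ra := (fun x y : E => hd x == tl y).

Lemma tl_belast a s : path ra a s -> map tl s = map hd (belast a s).
Proof. by elim: s a => [|b s IH] a //= /andP[/eqP -> /IH ->]. Qed.

Lemma zpathE Z u v a s : zpath tl hd Z u v (a :: s) <->
  [/\ tl a = u, path ra a s, hd (last a s) = v,
      all (fun x => x \in Z) (map tl s) & uniq (map tl s)].
Proof.
rewrite /=; split => -[h1 h2 h3 h4 h5]; split => //; move: h4 h5;
  rewrite (tl_belast h2) ?all_map //.
Qed.

Definition zwalk (Z : {set V}) u v (W : seq E) := match W with [::] => False
  | a :: s => [/\ tl a = u, path ra a s, hd (last a s) = v &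
                  all (fun x => x \in Z) (map tl s)] end.

Lemma zpath_walk Z u v W : zpath tl hd Z u v W -> zwalk Z u v W.
Proof. by case: W => // a s /zpathE []. Qed.

Lemma hd_mem a s x : path ra a s -> x \in a :: s ->
  (hd x \in map tl s) || (hd x == hd (last a s)).
Proof.
elim: s a => [|b s IH] a /=; first by move=> _; rewrite inE => /eqP ->; idtac.
case/andP => /eqP hab pb; rewrite inE => /orP[/eqP ->|xin].
  by rewrite hab inE eqxx.
by case/orP: (IH _ pb xin) => h; rewrite inE h ?orbT.
Qed.

Lemma meets_sub Z (Q Q' : seq E) : {subset Q <= Q'} ->
  zcycle_meets tl hd Z Q -> zcycle_meets tl hd Z Q'.
Proof.
move=> sQ [XO [AO [h1 h2 h3 [a [aQ h]]]]]; exists XO, AO; split => //.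
by exists a; split => //; apply: sQ.
Qed.


Lemma SH Z s a u v : zwalk Z u v (a :: s) -> exists Q,
  [/\ zpath tl hd Z u v Q, {subset Q <= a :: s} &
      Q = a :: s \/ zcycle_meets tl hd Z Q].
Proof.
elim: s a u v => [|b s IH] a u v.
  move=> [h1 h2 h3 h4]; exists [:: a]; split => //; by left.
move=> [hu /= /andP[/eqP hab pbs] hv /andP[tbZ aZ]].
have [Q0 [zQ0 sQ0 oQ0]] := IH b (tl b) v (And4 erefl pbs hv aZ).
case: Q0 zQ0 sQ0 oQ0 => // b0 Q /zpathE [tb0 pQ lQ aQ uQ] sQ0 oQ0.
have sQ : {subset Q <= b :: s} by move=> x xQ; apply: sQ0; rewrite inE xQ orbT.
case: (boolP (tl b \in map tl Q)) => [/mapP [c cQ tc]|tbQ].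
  case/splitPr: cQ tc pQ lQ aQ uQ sQ => Q1 Q2 tc.
  rewrite cat_path last_cat /= => /andP[pQ1 /andP[/eqP hlc pQ2]] lQ.
  rewrite map_cat all_cat cat_uniq /= => /andP[aQ1 /andP[tcZ aQ2]].
  case/and3P => uQ1 /norP[tcQ1 _] /andP[tcQ2 uQ2] sQ.
  exists [:: a, c & Q2]; split.
  - apply/zpathE; split => //=; first by rewrite hab tc eqxx.
    by rewrite tcZ aQ2.
    by rewrite tcQ2.
  - move=> x; rewrite inE => /orP[/eqP ->|xQ2]; first by rewrite inE eqxx.
    have : x \in b :: s by apply: sQ; rewrite mem_cat xQ2 orbT.
    by rewrite [x \in a :: _]inE => ->; rewrite orbT.
  - right; exists (tl @: [set x in b0 :: Q1]), [set x in b0 :: Q1]; split.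
    + move=> x; rewrite inE => xin; split => //; first by apply: imset_f; rewrite inE.
      have pb0 : path ra b0 Q1 by [].
      case/orP: (hd_mem pb0 xin) => [/mapP [y yQ1 ->]|/eqP ->].
        by apply: imset_f; rewrite !inE yQ1 orbT.
      by rewrite hlc -tc -tb0; apply: imset_f; rewrite !inE eqxx.
    + apply/subsetP => y /imsetP [x]; rewrite inE => xin ->.
      move: xin; rewrite inE => /orP[/eqP ->|xQ1]; first by rewrite tb0 tc.
      by move/allP: aQ1; apply; apply: map_f.
    + exists (b0 :: Q1); split => //.
      * by rewrite /= rcons_path pQ1 /= hlc tb0 tc.
      * by rewrite /= uQ1 andbT tb0 tc.
    + exists a; split; first by rewrite inE eqxx.
      by right; rewrite hab -tb0; apply: imset_f; rewrite !inE eqxx.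
exists [:: a, b0 & Q]; split.
- apply/zpathE; split => //=; first by rewrite hab tb0 eqxx.
    by rewrite tb0 tbZ aQ.
  by rewrite tb0 tbQ.
- move=> x; rewrite inE => /orP[/eqP ->|xQ]; first by rewrite inE eqxx.
  by rewrite inE sQ0 ?orbT.
- case: oQ0 => [-> | m]; first by left.
  by right; apply: meets_sub m => x xQ; rewrite inE xQ orbT.
Qed.


Lemma arelP (A : {set E}) x y :
  reflect (exists2 a, a \in A & tl a = x /\ hd a = y) (arel tl hd A x y).
Proof.
apply: (iffP existsP) => [[a /andP[aA /andP[/eqP h1 /eqP h2]]]|[a aA [h1 h2]]].
  by exists a.
by exists a; rewrite aA h1 h2 !eqxx.
Qed.

Lemma outarc inG X A : subdig tl hd inG X A -> strong tl hd X A ->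
  ~ trivial X A -> forall x, x \in X -> exists2 a, a \in A & tl a = x.
Proof.
move=> sd [Xn st] nt x xX.
case: (boolP (X :\ x == set0)) => [/eqP X1|].
  have eX : X = [set x].
    apply/setP => y; rewrite inE; apply/idP/eqP => [yX|->//].
    by apply/eqP/negPn/negP => yx; move/setP: X1 => /(_ y); rewrite !inE yx yX.
  case: (eqVneq A set0) => [A0|/set0Pn [a aA]].
    by case: nt; split => //; rewrite eX cards1.
  exists a => //; have [_ h _] := sd a aA.
  by rewrite eX inE in h; apply/eqP.
case/set0Pn => y; rewrite !inE => /andP[yx yX].
have /connectP [p pp ly] := st x y xX yX (negbT (introF eqP (fun e => (negP yx) (introT eqP (esym e))))).
case: p pp ly => [|z p] /=; first by move=> _ yx'; rewrite yx' eqxx in yx.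
by case/andP => /arelP [a aA [h1 _]] _ _; exists a.
Qed.

Lemma cycle_inj X A : is_cycle tl hd X A -> {in A &, injective tl}.
Proof.
case=> s [_ _ us -> _] a b; rewrite !inE.
elim: s us => // c s IH /= /andP[tc us]; rewrite !inE.
case/orP=> [/eqP ->|aS] /orP[/eqP ->|bS] // h.
- by rewrite h in tc; case/negP: tc; apply: map_f.
- by rewrite -h in tc; case/negP: tc; apply: map_f.
- exact: IH.
Qed.

Lemma cycle_of inG X A : subdig tl hd inG X A -> strong tl hd X A ->
  (forall x, x \in X -> exists2 a, a \in A & tl a = x) ->
  {in A &, injective tl} -> is_cycle tl hd X A.
Proof.
move=> sd [Xn st] oa inj.
case/set0Pn: Xn => x xX.
have [a0 a0A ta0] := oa x xX.
pose out v := [pick a in A | tl a == v].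
pose g v := odflt a0 (out v).
pose f v := hd (g v).
have gP v : v \in X -> [/\ g v \in A, tl (g v) = v & hd (g v) = f v].
  move=> vX; rewrite /f /g /out; case: pickP => [b /andP[bA /eqP tb]|none] /=.
    by split.
  have [c cA tc] := oa v vX; by move: (none c); rewrite cA tc eqxx.
have gA a : a \in A -> g (tl a) = a.
  move=> aA; have [_ h1 _] := sd a aA.
  by have [h2 h3 _] := gP _ h1; apply: inj.
have arf v w : arel tl hd A v w -> f v == w.
  by case/arelP => a aA [<- <-]; rewrite /f gA.
have cf v w : connect (arel tl hd A) v w -> fconnect f v w.
  case/connectP => p pp ->; apply/connectP; exists p => //.
  by apply: sub_path pp => y z /arf.
have fX v : v \in X -> f v \in X.
  by move=> vX; have [h1 _ <-] := gP _ vX; case: (sd _ h1).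
have oX y : y \in orbit f x -> y \in X.
  rewrite /orbit => /trajectP [i _ ->]; elim: i => //= i IH; exact: fX.
have Xo y : y \in X -> y \in orbit f x.
  move=> yX; rewrite -fconnect_orbit; case: (eqVneq x y) => [->|xy].
    exact: connect0.
  exact/cf/st.
have fc : fcycle f (orbit f x).
  apply: (all_iffLR orbitPcycle 2 0); rewrite inE.
  case: (eqVneq (f x) x) => [->|fxx]; first exact: connect0.
  by apply/cf/st => //; apply: fX.
exists (map g (orbit f x)); split.
- by have := Xo x xX; case: (orbit f x).
- rewrite cycle_map; apply: (sub_in_cycle (P := mem X)) fc.
    by move=> v w vX wX /= /eqP <-; have [_ _ ->] := gP _ vX; have [_ -> _] := gP _ (fX _ vX).
  by apply/allP => y /oX.
- have -> : map tl (map g (orbit f x)) = orbit f x.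
    rewrite -map_comp -[RHS]map_id; apply/eq_in_map => y /oX yX /=.
    by have [] := gP _ yX.
  exact: orbit_uniq.
- apply/setP => a; rewrite inE; apply/idP/mapP => [aA|[y yo ->]].
    by exists (tl a); [apply: Xo; case: (sd a aA) | rewrite gA].
  by have [] := gP _ (oX _ yo).
- apply/setP => y; apply/idP/imsetP => [yX|[a aA ->]].
    by have [h1 h2 _] := gP _ yX; exists (g y).
  by case: (sd a aA).
Qed.


Lemma arc_conn (B : {set E}) a : a \in B -> connect (arel tl hd B) (tl a) (hd a).
Proof. by move=> aB; apply: connect1; apply/arelP; exists a. Qed.

Lemma walk_conn (B : {set E}) a s : path ra a s -> {subset a :: s <= B} ->
  forall b, b \in a :: s -> connect (arel tl hd B) (tl a) (tl b) /\
                            connect (arel tl hd B) (hd b) (hd (last a s)).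
Proof.
elim: s a => [|c s IH] a /=.
  by move=> _ _ b; rewrite inE => /eqP ->; split; apply: connect0.
case/andP => /eqP hac pc sB.
have sB' : {subset c :: s <= B} by move=> y ys; apply: sB; rewrite inE ys orbT.
have aB : a \in B by apply: sB; rewrite inE eqxx.
have cB : c \in B by apply: sB'; rewrite inE eqxx.
have [_ IHc] := IH c pc sB' c (mem_head _ _).
move=> b; rewrite inE => /orP[/eqP ->|bin].
  split; first exact: connect0.
  by rewrite hac; apply: connect_trans IHc; apply: arc_conn.
have [h1 h2] := IH c pc sB' b bin; split => //.
by apply: connect_trans h1; rewrite -hac; apply: arc_conn.
Qed.

Lemma cycle_conn XO AO : is_cycle tl hd XO AO ->
  forall v w, v \in XO -> w \in XO -> connect (arel tl hd AO) v w.
Proof.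
case=> s [_ cs _ -> ->] v w /imsetP [b1 b1A ->] /imsetP [b2 b2A ->].
move: b1A b2A; rewrite !inE => b1s b2s.
case/splitPr: b1s b2s cs => s1 s2 b2s cs.
have : cycle ra (b1 :: s2 ++ s1).
  have -> : b1 :: s2 ++ s1 = rot (size s1) (s1 ++ b1 :: s2) by rewrite rot_size_cat.
  by rewrite rot_cycle.
rewrite /= rcons_path => /andP[pt _].
have mr : (b1 :: s2 ++ s1) =i (s1 ++ b1 :: s2).
  by move=> y; rewrite -(mem_rot (size s1) (s1 ++ _)) rot_size_cat.
have sB : {subset b1 :: s2 ++ s1 <= [set a in s1 ++ b1 :: s2]}.
  by move=> y yin; rewrite inE -mr.
have b2t : b2 \in b1 :: s2 ++ s1 by rewrite mr.
exact: (walk_conn pt sB b2t).1.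
Qed.

Lemma hub_strong (XL : {set V}) (B : {set E}) (H : {set V}) : XL != set0 ->
  (forall x y, x \in H -> y \in H -> connect (arel tl hd B) x y) ->
  (forall v, v \in XL -> exists x y, [/\ x \in H, y \in H,
      connect (arel tl hd B) x v & connect (arel tl hd B) v y]) ->
  strong tl hd XL B.
Proof.
move=> Xn hH hX; split => // v w vX wX _.
have [x1 [y1 [_ y1H _ c1]]] := hX v vX.
have [x2 [y2 [x2H _ c2 _]]] := hX w wX.
by apply: connect_trans c1 _; apply: connect_trans (hH _ _ y1H x2H) c2.
Qed.

Lemma zwalk_tail Z u v a c s : zwalk Z u v [:: a, c & s] ->
  [/\ hd a = tl c, tl c \in Z & zwalk Z (tl c) v (c :: s)].
Proof. by case=> h1 /= /andP[/eqP h2 h3] h4 /andP[h5 h6]. Qed.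

Lemma zpath_det Z (B : {set E}) u v1 v2 P Q : {in B &, injective tl} ->
  zwalk Z u v1 P -> zwalk Z u v2 Q -> {subset P <= B} -> {subset Q <= B} ->
  v1 \notin Z -> v2 \notin Z -> P = Q.
Proof.
move=> inj; elim: P u Q => [|a s IH] u [|b t] //.
move=> zP zQ sP sQ n1 n2.
have ab : a = b.
  apply: inj; [apply: sP | apply: sQ | ]; rewrite ?mem_head //.
  by case: zP => ->; case: zQ => ->.
subst b; case: s t IH zP zQ sP sQ => [|c s] [|d t] IH zP zQ sP sQ //.
- case: zQ => _ /= /andP[/eqP h _] _ /andP[tdZ _].
  by case: zP => _ _ /= h2 _; rewrite -h2 h tdZ in n1.
- case: zP => _ /= /andP[/eqP h _] _ /andP[tcZ _].
  by case: zQ => _ _ /= h2 _; rewrite -h2 h tcZ in n2.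
have [h1 _ zc] := zwalk_tail zP; have [h2 _ zd] := zwalk_tail zQ.
rewrite h2 in h1; rewrite -h1 in zc.
congr (_ :: _); apply: IH zc zd _ _ n1 n2.
  by move=> y ys; apply: sP; rewrite inE ys orbT.
by move=> y ys; apply: sQ; rewrite inE ys orbT.
Qed.

Lemma stay (B : {set E}) (K : {set V}) a s : path ra a s -> {subset a :: s <= B} ->
  (forall b, b \in B -> tl b \in K -> hd b \in K) ->
  forall a', a' \in a :: s -> hd a' \in K -> hd (last a s) \in K.
Proof.
move=> + + st; elim: s a => [|c s IH] a /=.
  by move=> _ _ a'; rewrite inE => /eqP ->.
case/andP => /eqP hac pc sB a'; rewrite inE => /orP[/eqP ->|a'in] ha'.
  apply: (IH c pc _ c (mem_head _ _)).
    by move=> y ys; apply: sB; rewrite inE ys orbT.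
  by apply: st; [apply: sB; rewrite !inE eqxx orbT | rewrite -hac].
apply: (IH c pc _ a' a'in ha').
by move=> y ys; apply: sB; rewrite inE ys orbT.
Qed.

Lemma noO (Z : {set V}) (B : {set E}) (XO : {set V}) (AO : {set E}) u v P : {in B &, injective tl} ->
  AO \subset B -> subdig tl hd (fun _ => True) XO AO -> is_cycle tl hd XO AO ->
  XO \subset Z -> zwalk Z u v P -> {subset P <= B} -> v \notin Z ->
  (exists a, a \in P /\ (tl a \in XO \/ hd a \in XO)) -> False.
Proof.
move=> inj sAO sd cy sXZ zP sP vZ [a [aP ha]].
have st b : b \in B -> tl b \in XO -> hd b \in XO.
  move=> bB tbX; case: cy => s [_ _ _ eA eX].
  rewrite eX in tbX; case/imsetP: tbX => c cA tc.
  have cb : c = b by apply: inj => //; apply: (subsetP sAO).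
  by subst c; have [] := sd b cA.
have ha' : hd a \in XO.
  case: ha => // h; apply: st h; exact: sP.
case: P zP sP aP => // a0 s [_ pa0 lv _] sP aP.
have := stay pa0 sP st aP ha'; rewrite lv => vX.
by move/subsetP: sXZ => /(_ _ vX); rewrite (negbTE vZ).
Qed.


Lemma WP (Z : {set V}) (B : {set E}) x y W b : zwalk Z x y W -> {subset W <= B} ->
  b \in W -> [/\ (tl b = x \/ tl b \in Z), connect (arel tl hd B) x (tl b),
    connect (arel tl hd B) (tl b) y, connect (arel tl hd B) x (hd b) /\
    connect (arel tl hd B) (hd b) y & (hd b = y \/ exists2 c, c \in W & tl c = hd b)].
Proof.
case: W => // a s [<- pa <- aZ] sB bin.
have [c1 c2] := walk_conn pa sB bin.
have bB : b \in B by apply: sB.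
split => //.
- move: bin; rewrite inE => /orP[/eqP ->|bs]; [by left | right].
  by move/allP: aZ; apply; apply: map_f.
- by apply: connect_trans (arc_conn bB) c2.
- by split => //; apply: connect_trans c1 (arc_conn bB).
- case/orP: (hd_mem pa bin) => [/mapP [c cs ->]|/eqP ->]; [right|by left].
  by exists c => //; rewrite inE cs orbT.
Qed.

Lemma conn_mono (A1 A2 : {set E}) x y : A1 \subset A2 ->
  connect (arel tl hd A1) x y -> connect (arel tl hd A2) x y.
Proof.
move=> sA; apply: connect_sub => v w /arelP [a aA h]; apply: connect1.
by apply/arelP; exists a => //; apply: (subsetP sA).
Qed.

Lemma zwalk_ends Z u v u' v' W : zwalk Z u v W -> zwalk Z u' v' W -> u = u' /\ v = v'.
Proof. by case: W => // a s [<- _ <- _] [<- _ <- _]. Qed.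

End G.

Section G2.
Variables (V E : finType) (tl hd : E -> V).
Local Notation ra := (fun x y : E => hd x == tl y).

Lemma dir2 (S Z X' : {set V}) (A' : {set (V * V)}) :
  [disjoint S & Z] -> X' \subset ~: S -> inFbad tl hd Z X' A' ->
  exists (X : {set V}) (A : {set E}), X \subset ~: S /\ inF tl hd (fun _ => True) X A.
Proof.
move=> dSZ sXS [sdA sXZ stA ntA ngA].
have ZnS v : v \in Z -> v \notin S by move=> vZ; rewrite (disjointFl dSZ vZ).
have XnS v : v \in X' -> v \notin S by move=> vX; have := subsetP sXS v vX; rewrite inE.
have XnZ v : v \in X' -> v \notin Z by move=> vX; have := subsetP sXZ v vX; rewrite inE.
pose Pch (p : V * V) := epsilon (inhabits [::]) (fun P => zpath tl hd Z p.1 p.2 P).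
have PchP p : p \in A' -> [/\ zpath tl hd Z p.1 p.2 (Pch p), p.1 \in X' & p.2 \in X'].
  move=> pA; have [[_ _ ex] h1 h2] := sdA p pA; split => //.
  exact: (epsilon_spec (inhabits [::]) _ ex).
pose AL0 := \bigcup_(p in A') [set a in Pch p].
have oA := outarc sdA stA ntA.
have inAL0 p a : p \in A' -> a \in Pch p -> a \in AL0.
  by move=> pA aP; apply/bigcupP; exists p => //; rewrite inE.
have XL0 x : x \in X' -> x \in tl @: AL0.
  move=> xX; have [p pA px] := oA x xX; have [zp _ _] := PchP p pA.
  have := inAL0 p; case: (Pch p) zp => // a s [ta _ _ _ _] sP.
  by rewrite -px -ta; apply: imset_f; apply: (sP a pA); rewrite mem_head.
have XLE (E0 : {set E}) x : x \in X' -> x \in tl @: (AL0 :|: E0).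
  by move=> /XL0; apply/subsetP/imsetS/subsetUl.
have fin (E0 : {set E}) :
   (forall b, b \in E0 -> [/\ tl b \notin S, hd b \in tl @: (AL0 :|: E0) &
      exists x y, [/\ x \in X', y \in X', connect (arel tl hd (AL0 :|: E0)) x (tl b)
                     & connect (arel tl hd (AL0 :|: E0)) (tl b) y]]) ->
   ~ is_cycle tl hd (tl @: (AL0 :|: E0)) (AL0 :|: E0) ->
   exists (X : {set V}) (A : {set E}), X \subset ~: S /\ inF tl hd (fun _ => True) X A.
  set AL := AL0 :|: E0 => hE0 nc.
  have sAL0 : AL0 \subset AL by apply: subsetUl.
  have PsAL p : p \in A' -> {subset Pch p <= AL}.
    by move=> pA a aP; apply: (subsetP sAL0); apply: inAL0 aP.
  have XL x : x \in X' -> exists2 a, a \in AL & tl a = x.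
    move=> xX; have [p pA px] := oA x xX; have [zp _ _] := PchP p pA.
    case: (Pch p) zp (PsAL p pA) => // a s [ta _ _ _ _] sP.
    by exists a; [apply: sP; rewrite mem_head | rewrite ta].
  have XL' x : x \in X' -> x \in tl @: AL.
    by move=> xX; have [a aA <-] := XL x xX; apply: imset_f.
  have AL0P b : b \in AL0 -> exists2 p, p \in A' & b \in Pch p.
    by case/bigcupP => p pA; rewrite inE => bP; exists p.
  have hub x y : x \in X' -> y \in X' -> connect (arel tl hd AL) x y.
    move=> xX yX; case: (eqVneq x y) => [->|xy]; first exact: connect0.
    have := stA.2 x y xX yX xy; apply: connect_sub => v w /arelP [p pA [<- <-]].
    have [zp _ _] := PchP p pA.
    case: (Pch p) zp (PsAL p pA) => // a s zp sP.
    have [_ _ _ [h1 h2] _] := WP (zpath_walk zp) sP (mem_head a s).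
    exact: connect_trans h1 h2.
  exists (tl @: AL), AL; split; last split.
  - apply/subsetP => v /imsetP [b]; rewrite inE => /orP[bA0|bE0] ->; rewrite inE.
      have [p pA bP] := AL0P b bA0; have [zp h1 _] := PchP p pA.
      have [[->|tZ] _ _ _ _] := WP (zpath_walk zp) (PsAL p pA) bP; first exact: XnS.
      exact: ZnS tZ.
    by have [] := hE0 b bE0.
  - move=> b bA; split => //; first exact: imset_f.
    move: bA; rewrite inE => /orP[bA0|bE0]; last by have [] := hE0 b bE0.
    have [p pA bP] := AL0P b bA0; have [zp h1 h2] := PchP p pA.
    have [_ _ _ _ [->|[c cP <-]]] := WP (zpath_walk zp) (PsAL p pA) bP.
      exact: XL'.
    by apply: imset_f; apply: (PsAL p pA).
  - have [x xX] := set0Pn _ stA.1.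
    apply: (hub_strong (H := X')) => //.
      by apply/set0Pn; exists x; apply: XL'.
    move=> v /imsetP [b]; rewrite inE => /orP[bA0|bE0] ->; last by have [_ _] := hE0 b bE0.
    have [p pA bP] := AL0P b bA0; have [zp h1 h2] := PchP p pA.
    have [_ c1 c2 _ _] := WP (zpath_walk zp) (PsAL p pA) bP.
    by exists p.1, p.2.
  - case=> _ AL0e; have [x xX] := set0Pn _ stA.1.
    have [a aA _] := XL x xX; by rewrite AL0e inE in aA.
  - exact: nc.
case: (boolP [exists p1 : V * V, exists p2 : V * V,
          [&& p1 \in A', p2 \in A', p1.1 == p2.1 & p1 != p2]]).
  case/existsP => p1 /existsP [p2 /and4P [p1A p2A /eqP e12 n12]].
  apply: (fin set0); first by move=> b; rewrite inE.
  move/cycle_inj => inj.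
  have [z1 _ y1] := PchP p1 p1A; have [z2 _ y2] := PchP p2 p2A.
  have sub p : p \in A' -> {subset Pch p <= AL0 :|: set0}.
    by move=> pA a aP; rewrite inE (inAL0 p) //.
  have e : Pch p1 = Pch p2.
    apply: (zpath_det inj (zpath_walk z1) _ (sub _ p1A) (sub _ p2A) (XnZ _ y1) (XnZ _ y2)).
    by rewrite e12; exact: zpath_walk z2.
  rewrite e in z1; have [e1 e2] := zwalk_ends (zpath_walk z1) (zpath_walk z2).
  by case/negP: n12; apply/eqP; apply: injective_projections.
move/existsPn => nex.
have injA : {in A' &, injective (@fst V V)}.
  move=> p1 p2 p1A p2A e; apply/eqP; move: (nex p1) => /existsPn /(_ p2).
  by rewrite p1A p2A e eqxx /= negbK.
have cyA : is_cycle fst snd X' A' := cycle_of sdA stA oA injA.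
have [p pA ngp] : exists2 p, p \in A' & ~ good_arc tl hd Z p.
  apply: NNPP => nx; apply: ngA; split => // p pA; apply: NNPP => ng; apply: nx.
  by exists p.
have [zP xX yX] := PchP p pA.
case: (classic (exists Q, zpath tl hd Z p.1 p.2 Q /\ Q <> Pch p)) => [[Q [zQ nQ]]|noQ].
  have sQ : {subset Q <= AL0 :|: [set a in Q]} by move=> a aQ; rewrite !inE aQ orbT.
  have sPL : {subset Pch p <= AL0 :|: [set a in Q]}.
    by move=> c cP; rewrite inE (inAL0 p).
  apply: (fin [set a in Q]).
    move=> b; rewrite inE => bQ.
    have [tb c1 c2 _ hb] := WP (zpath_walk zQ) sQ bQ.
    split.
    - by case: tb => [->|/ZnS //]; apply: XnS.
    - case: hb => [->|[c cQ <-]]; last by apply: imset_f; apply: sQ.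
      exact: XLE.
    - by exists p.1, p.2.
  move/cycle_inj => inj; apply: nQ.
  exact: (zpath_det inj (zpath_walk zQ) (zpath_walk zP) sQ sPL (XnZ _ yX) (XnZ _ yX)).
case: (classic (zcycle_meets tl hd Z (Pch p))) => [m|nm]; last first.
  case: ngp; exists (Pch p); split => // Q zQ; apply: NNPP => ne; apply: noQ.
  by exists Q.
case: m => XO [AO [sdO sOZ cyO [a [aP ha]]]].
have sAO : AO \subset AL0 :|: AO by apply: subsetUr.
have sPL : {subset Pch p <= AL0 :|: AO} by move=> c cP; rewrite inE (inAL0 p).
apply: (fin AO).
  move=> b bO.
  have [_ tbX hbX] := sdO b bO.
  have eXO : XO = tl @: AO by case: cyO => s [_ _ _ _ ->].
  split.
  - by apply: ZnS; apply: (subsetP sOZ).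
  - by rewrite eXO in hbX; apply: (subsetP (imsetS tl sAO)).
  - have [_ c1 c2 [c3 c4] _] := WP (zpath_walk zP) sPL aP.
    have [c [cX [l1 l2]]] : exists c, c \in XO /\
        (connect (arel tl hd (AL0 :|: AO)) p.1 c /\ connect (arel tl hd (AL0 :|: AO)) c p.2).
      by case: ha => h; [exists (tl a) | exists (hd a)].
    exists p.1, p.2; split => //.
      apply: connect_trans l1 _; apply: conn_mono sAO _; exact: cycle_conn cyO c (tl b) cX tbX.
    apply: connect_trans _ l2; apply: conn_mono sAO _; exact: cycle_conn cyO (tl b) c tbX cX.
move/cycle_inj => inj.
apply: (noO inj sAO sdO cyO sOZ (zpath_walk zP) sPL (XnZ _ yX)).
by exists a.
Qed.


Definition pb (P : Prop) : bool := if excluded_middle_informative P then true else false.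
Lemma pbP P : reflect P (pb P).
Proof. by rewrite /pb; case: excluded_middle_informative => h; constructor. Qed.

Lemma cat_injl (s t1 t2 : seq E) : s ++ t1 = s ++ t2 -> t1 = t2.
Proof. by elim: s => //= a s IH [] /IH. Qed.

Lemma zconcat (Z : {set V}) x w y a s b t : zwalk tl hd Z x w (a :: s) -> w \in Z ->
  zwalk tl hd Z w y (b :: t) -> zwalk tl hd Z x y (a :: s ++ b :: t).
Proof.
move=> [h1 h2 h3 h4] wZ [h5 h6 h7 h8]; split => //.
- by rewrite cat_path h2 /= h3 h5 eqxx.
- by rewrite last_cat.
- by rewrite map_cat all_cat h4 /= h5 wZ.
Qed.

Definition pre (Z : {set V}) x w (W : seq E) := (W = [::] /\ x = w) \/ (w \in Z /\ zwalk tl hd Z x w W).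
Definition suf (Z : {set V}) w y (W : seq E) := (W = [::] /\ w = y) \/ (w \in Z /\ zwalk tl hd Z w y W).

Lemma glue Z x y e W1 W2 : pre Z x (tl e) W1 -> suf Z (hd e) y W2 ->
  zwalk tl hd Z x y (W1 ++ e :: W2).
Proof.
have ze : zwalk tl hd Z (tl e) (hd e) [:: e] by [].
move=> hp hs.
have z2 : zwalk tl hd Z (tl e) y (e :: W2).
  case: hs => [[-> <-] //|[hZ zW]].
  by case: W2 zW => // b t zW; apply: (zconcat (s := [::]) ze hZ zW).
case: hp => [[-> ->] //|[tZ zW]].
by case: W1 zW => // a s zW; apply: (zconcat zW tZ z2).
Qed.

Lemma dir1 (S Z X : {set V}) (A : {set E}) u : u \in X -> u \notin Z ->
  X \subset ~: S -> inF tl hd (fun _ => True) X A ->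
  exists (X' : {set V}) (A' : {set (V * V)}), X' \subset ~: S /\ inFbad tl hd Z X' A'.
Proof.
move=> uX uZ sXS [sd st nt nc].
pose X' := X :\: Z.
have X'P v : (v \in X') = (v \notin Z) && (v \in X) by rewrite inE.
pose A' := [set p : V * V | [&& p.1 \in X', p.2 \in X' &
              pb (exists P, zpath tl hd Z p.1 p.2 P /\ {subset P <= A})]].
have mkA x y W : x \in X' -> y \in X' -> zwalk tl hd Z x y W -> {subset W <= A} ->
    (x, y) \in A'.
  move=> xX yX zW sW; rewrite inE /= xX yX /=; apply/pbP.
  case: W zW sW => [|a s] zW sW; first by case: zW. have [Q [zQ sQ _]] := SH zW.
  by exists Q; split => // c /sQ /sW.
have lastX a s : {subset a :: s <= A} -> hd (last a s) \in X.
  by move=> sA; have [_ _] := sd _ (sA _ (mem_last a s)).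
have oa := outarc sd st nt.
pose Inv (Rp Rq : V -> Prop) w := exists2 x0, x0 \in X' &
   (w = x0 /\ Rp x0) \/ (w \in Z /\ Rq x0 /\ exists W, zwalk tl hd Z x0 w W /\ {subset W <= A}).
have proj (Rp Rq : V -> Prop) : (forall x, Rp x -> Rq x) ->
    (forall x y, Rq x -> (x, y) \in A' -> Rp y) ->
    forall p w, path (arel tl hd A) w p -> Inv Rp Rq w -> Inv Rp Rq (last w p).
  move=> hpq hcl; elim=> [|w' p IH] w //= /andP[/arelP [e eA [te he]] pp] [x0 x0X hI].
  apply: (IH w' pp); rewrite /Inv.
  have ew : hd e \in X by have [] := sd e eA.
  case: hI => [[wx0 Rx]|[wZ [Rq0 [W [zW sW]]]]].
    case: (boolP (w' \in Z)) => w'Z.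
      exists x0 => //; right; split => //; split; first exact: hpq.
      by exists [:: e]; split => [/=|c]; [split => //; rewrite te | rewrite inE => /eqP ->].
    have w'X : w' \in X' by rewrite X'P w'Z -he ew.
    exists w' => //; left; split => //; apply: (hcl x0) => //; first exact: hpq.
    apply: (mkA _ _ [:: e]) => //; first by rewrite -wx0 -te -he.
    by move=> c; rewrite inE => /eqP ->.
  case: W zW sW => [|b s] zW sW; first by case: zW.
  case: zW => tb pb lb ab.
  have zW2 : zwalk tl hd Z x0 w' (b :: rcons s e).
    split => //.
    - by rewrite rcons_path pb lb te eqxx.
    - by rewrite last_rcons.
    - by rewrite map_rcons all_rcons te wZ.
  have sW2 : {subset b :: rcons s e <= A}.
    move=> c; rewrite inE mem_rcons inE => /orP[/eqP ->|/orP[/eqP -> //|cs]].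
      by apply: sW; rewrite mem_head.
    by apply: sW; rewrite inE cs orbT.
  case: (boolP (w' \in Z)) => w'Z.
    by exists x0 => //; right; split => //; split => //; exists (b :: rcons s e).
  have w'X : w' \in X' by rewrite X'P w'Z -he ew.
  by exists w' => //; left; split => //; apply: (hcl x0) => //; apply: mkA zW2 sW2.
have Xne : X' != set0 by apply/set0Pn; exists u; rewrite X'P uZ uX.
have stA : strong fst snd X' A'.
  split => // x y xX yX xy.
  have xX0 : x \in X by move: xX; rewrite X'P => /andP[].
  have yX0 : y \in X by move: yX; rewrite X'P => /andP[].
  have /connectP [p pp ly] := st.2 x y xX0 yX0 xy.
  pose R := fun v => connect (arel fst snd A') x v.
  have cl : forall x1 y1, R x1 -> (x1, y1) \in A' -> R y1.
    move=> x1 y1 c1 h; apply: connect_trans c1 _; apply: connect1.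
    by apply/arelP; exists (x1, y1).
  have h0 : Inv R R x by exists x => //; left; split => //; apply: connect0.
  case: (proj R R (fun _ h => h) cl p x pp h0).
  move=> x0 _; rewrite -ly => -[[-> //]|[yZ _]].
  by move: yX; rewrite X'P yZ.
have A'P p : p \in A' -> [/\ p.1 \in X', p.2 \in X' &
    exists P, zpath tl hd Z p.1 p.2 P /\ {subset P <= A}].
  by rewrite inE => /and3P [h1 h2 /pbP h3].
have sdA : subdig fst snd (torso_arc tl hd Z) X' A'.
  move=> p pA; have [h1 h2 [P [zP _]]] := A'P p pA; split => //; split.
  - by move: h1; rewrite X'P => /andP[].
  - by move: h2; rewrite X'P => /andP[].
  - by exists P.
have uX' : u \in X' by rewrite X'P uZ uX.
have ze e : zwalk tl hd Z (tl e) (hd e) [:: e] by [].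
have se e : e \in A -> {subset [:: e] <= A} by move=> eA c; rewrite inE => /eqP ->.
have ntA : ~ trivial X' A'.
  case=> _ A0.
  have [e eA te] := oa u uX.
  have heX : hd e \in X by have [] := sd e eA.
  case: (boolP (hd e \in Z)) => heZ; last first.
    have : (u, hd e) \in A'.
      apply: (mkA _ _ [:: e]) => //; first by rewrite X'P heZ heX.
      exact: se.
    by rewrite A0 inE.
  have hu : hd e != u by apply/eqP => h; rewrite -h heZ in uZ.
  have /connectP [p pp lp] := st.2 _ _ heX uX hu.
  pose Rp := fun _ : V => exists q, q \in A'.
  have cl : forall x y, True -> (x, y) \in A' -> Rp y by move=> x y _ h; exists (x, y).
  have h0 : Inv Rp (fun _ => True) (hd e).
    exists u => //; right; split => //; split => //; exists [:: e]; split; last exact: se.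
    by rewrite -te.
  case: (proj Rp (fun _ => True) (fun _ _ => Logic.I) cl p _ pp h0) => x0 _.
  rewrite -lp => -[[_ [q qA]]|[uZ' _]]; first by rewrite A0 inE in qA.
  by rewrite uZ' in uZ.
have sX'S : X' \subset ~: S by apply: subset_trans sXS; apply: subsetDl.
have sX'Z : X' \subset ~: Z by apply/subsetP => v; rewrite X'P inE => /andP[].
exists X', A'; split => //; split => //.
case=> cyA good.
have injA := cycle_inj cyA.
have fwd : forall p w, path (arel tl hd A) w p -> last w p \notin Z -> w \in Z ->
    exists y W, [/\ y \in X', zwalk tl hd Z w y W & {subset W <= A}].
  elim=> [|w' p IH] w /=; first by move=> _ /negP h1 h2; case: (h1 h2).
  case/andP => /arelP [b bA [tb hb]] pp lZ wZ.
  case: (boolP (w' \in Z)) => w'Z.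
    have [y [W [yX zW sW]]] := IH w' pp lZ w'Z.
    case: W zW sW => [|c s] zW sW; first by case: zW.
    exists y, (b :: c :: s); split => //.
      case: zW => tc pc lc ac; split => //=; first by rewrite hb tc eqxx pc.
      by rewrite tc w'Z ac.
    by move=> d; rewrite inE => /orP[/eqP -> // | ds]; apply: sW.
  exists w', [:: b]; split => //; last exact: se.
    by rewrite X'P w'Z -hb; have [] := sd b bA.
have Seg e : e \in A -> exists x y W1 W2, [/\ x \in X', y \in X',
    pre Z x (tl e) W1 /\ {subset W1 <= A} & suf Z (hd e) y W2 /\ {subset W2 <= A}].
  move=> eA; have [_ teX heX] := sd e eA.
  have /connectP [p pp lp] : connect (arel tl hd A) u (tl e).
    by case: (eqVneq u (tl e)) => [->|ne]; [apply: connect0 | apply: st.2].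
  have h0 : Inv (fun _ => True) (fun _ => True) u by exists u => //; left.
  case: (proj (fun _ => True) (fun _ => True) (fun _ h => h) (fun _ _ _ _ => Logic.I) p u pp h0).
  move=> x0 x0X; rewrite -lp => hI.
  have [W1 [h1 h2]] : exists W1, pre Z x0 (tl e) W1 /\ {subset W1 <= A}.
    case: hI => [[-> _]|[teZ [_ [W [zW sW]]]]]; first by exists [::]; split => //; left.
    by exists W; split => //; right.
  case: (boolP (hd e \in Z)) => heZ.
    have hu : hd e != u by apply/eqP => h; rewrite -h heZ in uZ.
    have /connectP [q qp lq] := st.2 _ _ heX uX hu.
    have lqZ : last (hd e) q \notin Z by rewrite -lq.
    have [y [W [yX zW sW]]] := fwd q _ qp lqZ heZ.
    by exists x0, y, W1, W; split => //; split => //; right.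
  exists x0, (hd e), W1, [::]; split => //; first by rewrite X'P heZ heX.
  by split => //; left.
have uniqW x y W Q : good_arc tl hd Z (x, y) -> zwalk tl hd Z x y W ->
    zpath tl hd Z x y Q -> W = Q.
  move=> [P [zP uP nm]] zW zQ; case: W zW => [|a s] zW; first by case: zW.
  have [Q0 [zQ0 sQ0 [e0|m]]] := SH zW.
    by rewrite -e0 (uP _ zQ0) (uP _ zQ).
  by case: nm; rewrite -(uP _ zQ0).
have injE : {in A &, injective tl}.
  move=> e1 e2 e1A e2A t12.
  have [x1 [y1 [W1 [W2 [x1X y1X [p1 s1] [q1 s2]]]]]] := Seg e1 e1A.
  have [x2 [y2 [W1' [W2' [x2X y2X _ [q2 s2']]]]]] := Seg e2 e2A.
  have za := glue p1 q1.
  have zb : zwalk tl hd Z x1 y2 (W1 ++ e2 :: W2') by apply: glue => //; rewrite -t12.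
  have sa : {subset W1 ++ e1 :: W2 <= A}.
    by move=> c; rewrite mem_cat inE => /or3P [/s1|/eqP->|/s2].
  have sb : {subset W1 ++ e2 :: W2' <= A}.
    by move=> c; rewrite mem_cat inE => /or3P [/s1|/eqP->|/s2'].
  have a1 := mkA _ _ _ x1X y1X za sa; have a2 := mkA _ _ _ x1X y2X zb sb.
  have [ey] : (x1, y1) = (x1, y2) by apply: injA.
  rewrite -ey in zb.
  have g := good _ a1; have [P [zP _ _]] := g.
  have ea := uniqW _ _ _ _ g za zP; have eb := uniqW _ _ _ _ g zb zP.
  by rewrite -eb in ea; case: (cat_injl ea).
by apply: nc; apply: cycle_of sd st oa injE.
Qed.

End G2.

Unset Implicit Arguments. Set Strict Implicit.

Theorem lemma6 (V E : finType) (tl hd : E -> V) (k : nat) (T Z : {set V}) :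
  #|T| <= k.+1 ->
  (forall C : {set V}, strong_component tl hd (~: T) C ->
     ~ trivial C (induced tl hd C) -> out_regular1 tl C (induced tl hd C)) ->
  [disjoint Z & T] ->
  ~ (exists (X : {set V}) (A : {set E}),
       X \subset Z :|: T /\ inF tl hd (fun _ => True) X A) ->
  forall S : {set V}, [disjoint S & Z :|: T] ->
  ((exists (X : {set V}) (A : {set E}),
      X \subset ~: S /\ inF tl hd (fun _ => True) X A) <->
   (exists (X : {set V}) (A : {set (V * V)}),
      X \subset ~: S /\ inFbad tl hd Z X A)).
Proof.
move=> _ _ _ noF S dS; split.
  case=> X [A [sXS fX]].
  case: (boolP (X \subset Z :|: T)) => [sub|/subsetPn [u uX uZT]].
    by case: noF; exists X, A.
  have uZ : u \notin Z by apply: contra uZT; rewrite inE => ->.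
  exact: (dir1 uX uZ sXS fX).
case=> X' [A' [sXS fb]].
have dSZ : [disjoint S & Z] by apply: disjointWr dS; apply: subsetUl.
exact: (dir2 dSZ sXS fb).
Qed.
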